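(* Let $k\ge 1$, let $G=K_2\vee\overline{K_k}$, and let $v$ be a vertex of maximum degree in $G$. If $p\ge\max\{3,\Delta(G)\}$, then $G$ is $f_{p,v}$-edge-orientable.
   Context: $G_1\vee G_2$ denotes the join: the disjoint union of $G_1$ and $G_2$ plus all edges between them. $\overline{K_k}$ is the edgeless graph on $k$ vertices. An orientation of a graph $H$ is any digraph obtained by replacing each edge $uv$ with the arc $(u,v)$, with the arc $(v,u)$, or with both arcs. A kernel of a digraph $D$ is an independent set $S$ such that every vertex of $D-S$ has an out-neighbor in $S$. $D$ is kernel-perfect if every induced subdigraph of $D$ has a kernel. For $f:V(H)\to\mathbb{N}$, an orientation $D$ of $H$ is $f$-kernel-perfect if it is kernel-perfect and $f(v)\ge 1+d^+_D(v)$ for all $v$. For $f:E(G)\to\mathbb{N}$, $G$ is $f$-edge-orientable if its line graph $L(G)$ admits an $f$-kernel-perfect orientation. For $v\in V(G)$, define $f_{p,v}:E(G)\to\mathbb{N}$ by $f_{p,v}(e)=d_G(v)$ if $e$ is incident to $v$, and $f_{p,v}(e)=p$ otherwise. *)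

(* Defs.v *)
From mathcomp Require Import all_boot.
Unset Printing Implicit Defensive.

Definition simple_graph {V : finType} (adj : rel V) : Prop :=
  (forall x, ~~ adj x x) /\ (forall x y, adj x y = adj y x).

Definition deg {V : finType} (adj : rel V) (v : V) : nat := #|[set w | adj v w]|.

Definition maxdeg {V : finType} (adj : rel V) : nat := \max_(w : V) deg adj w.

Definition gjoin {V1 V2 : finType} (adj1 : rel V1) (adj2 : rel V2) : rel (V1 + V2)%type :=
  fun x y => match x, y with
             | inl a, inl b => adj1 a b
             | inr a, inr b => adj2 a b
             | _, _ => true
             end.

Definition K2 : rel bool := fun x y => x != y.
Definition edgeless (k : nat) : rel 'I_k := fun _ _ => false.

Definition Gk (k : nat) : rel (bool + 'I_k)%type := gjoin K2 (edgeless k).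

Definition is_edge {V : finType} (adj : rel V) (e : {set V}) : bool :=
  [exists x, exists y, adj x y && (e == [set x; y])].

Definition edge {V : finType} (adj : rel V) := {e : {set V} | is_edge adj e}.

Definition line_graph {V : finType} (adj : rel V) : rel (edge adj) :=
  fun e f => (e != f) && (val e :&: val f != set0).

(* A digraph on T is an arc relation [D : rel T]; D u v means the arc (u,v). *)

Definition orientation {T : finType} (H D : rel T) : Prop :=
  (forall u v, D u v -> H u v) /\ (forall u v, H u v -> D u v || D v u).

Definition kernel_of {T : finType} (D : rel T) (A S : {set T}) : Prop :=
  S \subset A /\
  (forall u v, u \in S -> v \in S -> ~~ D u v) /\
  (forall u, u \in A -> u \notin S -> exists2 w, w \in S & D u w).

Definition kernel_perfect {T : finType} (D : rel T) : Prop :=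
  forall A : {set T}, exists S : {set T}, kernel_of D A S.

Definition outdeg {T : finType} (D : rel T) (v : T) : nat := #|[set w | D v w]|.

Definition f_kernel_perfect_orientation {T : finType} (H : rel T) (f : T -> nat)
  (D : rel T) : Prop :=
  orientation H D /\ kernel_perfect D /\ (forall v, 1 + outdeg D v <= f v).

Definition f_edge_orientable {V : finType} (adj : rel V) (f : edge adj -> nat) : Prop :=
  exists D : rel (edge adj), f_kernel_perfect_orientation (line_graph adj) f D.

Definition f_pv {V : finType} (adj : rel V) (p : nat) (v : V) : edge adj -> nat :=
  fun e => if v \in val e then deg adj v else p.

(* Main.v *)
Require Import Defs.
From mathcomp Require Import all_boot zify.
Set Implicit Arguments. Unset Strict Implicit.

Lemma kp_sinks (T : finType) (D : rel T) :
  (forall A : {set T}, A != set0 ->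
     (exists2 s, s \in A & forall w, w \in A -> ~~ D s w) \/ (exists S, kernel_of D A S)) ->
  kernel_perfect D.
Proof.
move=> H A.
have [n] := ubnP #|A|; elim: n A => // n IH A leA.
have [->|nA] := eqVneq A set0.
  by exists set0; split; [exact: sub0set | split => // u; rewrite inE].
case: (H A nA) => [[s sA sink]|//].
set A' := A :\: (s |: [set u in A | D u s]).
have ltA : #|A'| < n.
  rewrite ltnS in leA; apply: leq_trans leA; apply: proper_card; apply/properP; split.
    by apply/subsetP => u; rewrite inE => /andP[].
  by exists s => //; rewrite !inE eqxx.
have [S' [sS' [indS' absS']]] := IH A' ltA.
exists (s |: S'); split; [|split].
- apply/subsetP => u; rewrite in_setU1 => /orP[/eqP->//|/(subsetP sS')].
  by rewrite inE => /andP[].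
- move=> u w; rewrite !in_setU1 => /orP[/eqP->|uS] /orP[/eqP->|wS].
  + exact: sink.
  + apply: sink; have := subsetP sS' _ wS; rewrite inE => /andP[] //.
  + have := subsetP sS' _ uS; rewrite !inE negb_or => /andP[/andP[_]].
    by move=> h uA; move: h; rewrite uA.
  + exact: indS'.
- move=> u uA; rewrite in_setU1 negb_or => /andP[us uS'].
  case Dus: (D u s); first by exists s; rewrite ?inE ?eqxx.
  have uA' : u \in A' by rewrite !inE negb_or us uA Dus.
  have [w wS Duw] := absS' u uA' uS'.
  by exists w; rewrite ?inE ?wS ?orbT.
Qed.

Lemma transfer (T U : finType) (phi : U -> T) (psi : T -> U)
  (phiK : cancel phi psi) (psiK : cancel psi phi)
  (H : rel T) (f : T -> nat) (R : rel U) :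
  (forall c d, R c d -> H (phi c) (phi d)) ->
  (forall c d, H (phi c) (phi d) -> R c d || R d c) ->
  kernel_perfect R ->
  (forall c, 1 + outdeg R c <= f (phi c)) ->
  exists D, f_kernel_perfect_orientation H f D.
Proof.
move=> RH HR kpR deg.
exists (fun e g => R (psi e) (psi g)); split; [split|split].
- by move=> u v /RH; rewrite !psiK.
- by move=> u v; rewrite -{1}(psiK u) -{1}(psiK v) => /HR.
- move=> A; have [S' [sS' [ind abs]]] := kpR (psi @: A).
  exists (phi @: S'); split; [|split].
  + apply/subsetP => u /imsetP[c cS ->].
    by have /imsetP[a aA ->] := subsetP sS' _ cS; rewrite psiK.
  + by move=> u v /imsetP[c cS ->] /imsetP[d dS ->] /=; rewrite !phiK; apply: ind.
  + move=> u uA uS.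
    have pA : psi u \in psi @: A by apply: imset_f.
    have pS : psi u \notin S'.
      by apply: contra uS => h; rewrite -(psiK u); apply: imset_f.
    have [w wS Rw] := abs _ pA pS.
    by exists (phi w); [apply: imset_f | rewrite phiK].
- move=> e; have := deg (psi e); rewrite psiK /outdeg.
  suff -> : #|[set w | R (psi e) (psi w)]| = #|[set d | R (psi e) d]| by [].
  have -> : [set w | R (psi e) (psi w)] = phi @: [set d | R (psi e) d].
    apply/setP => w; rewrite inE; apply/idP/imsetP.
      by move=> h; exists (psi w); rewrite ?inE ?psiK.
    by case=> d; rewrite inE => h ->; rewrite phiK.
  by apply: card_imset; apply: (can_inj phiK).
Qed.

Definition Code (k : nat) := option (bool * 'I_k)%type.

Definition E (k : nat) (c : Code k) : {set (bool + 'I_k)%type} :=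
  match c with None => [set inl true; inl false] | Some (t, i) => [set inl t; inr i] end.

Lemma E_edge k (c : Code k) : is_edge (Gk k) (E c).
Proof.
apply/existsP; case: c => [[t i]|].
  by exists (inl t); apply/existsP; exists (inr i); rewrite /= eqxx.
by exists (inl true); apply/existsP; exists (inl false); rewrite /= eqxx.
Qed.

Definition phi k (c : Code k) : edge (Gk k) := exist _ (E c) (E_edge c).

Lemma E_inj k : injective (@E k).
Proof.
move=> [[t i]|] [[t' j]|] /= /setP h.
- have h1 := h (inr i); have h2 := h (inl t); rewrite !inE /= ?eqxx /= in h1 h2.
  by move: h1 h2 => /esym/eqP [->] /esym/orP[/eqP [->]|/eqP].
- by have := h (inr i); rewrite !inE /= eqxx.
- by have := h (inr j); rewrite !inE /= eqxx.
- by [].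
Qed.

Lemma E_surj k (e : edge (Gk k)) : exists c, E c = val e.
Proof.
case: e => e /= /existsP[x /existsP[y /andP[]]].
case: x => [a|i]; case: y => [b|j] //= Hxy /eqP ->.
- exists None; move: Hxy; rewrite /K2; case: a; case: b => //= _.
  by rewrite setUC.
- by exists (Some (a, j)).
- by exists (Some (b, i)); rewrite /= setUC.
Qed.

Definition psi k (e : edge (Gk k)) : Code k := odflt None [pick c | E c == val e].

Lemma phiK k : cancel (@phi k) (@psi k).
Proof.
move=> c; rewrite /psi; case: pickP => [d /eqP /= h|/(_ c)]; last by rewrite /= eqxx.
by rewrite (E_inj h).
Qed.

Lemma psiK k : cancel (@psi k) (@phi k).
Proof.
move=> e; apply: val_inj => /=; rewrite /psi; case: pickP => [d /eqP //|h].
by have [c ec] := E_surj e; have := h c; rewrite ec eqxx.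
Qed.

Definition Adj k (c d : Code k) : bool :=
  (c != d) && match c, d with
              | None, None => false
              | Some (t, i), Some (t', j) => (t == t') || (i == j)
              | _, _ => true end.

Lemma meet_pair (T : finType) (p q r s : T) :
  ([set p; q] :&: [set r; s] != set0) = [|| p == r, p == s, q == r | q == s].
Proof.
apply/set0Pn/idP.
  by case=> x; rewrite !inE => /andP[] /orP[] /eqP -> /orP[] /eqP ->; rewrite eqxx ?orbT.
case/or4P=> /eqP ->; [exists r|exists s|exists r|exists s]; by rewrite !inE !eqxx ?orbT.
Qed.

Lemma lineE k (c d : Code k) : line_graph (Gk k) (phi c) (phi d) = Adj c d.
Proof.
rewrite /line_graph /Adj (inj_eq (can_inj (@phiK k))).
case: c => [[t i]|]; case: d => [[t' j]|] /=; rewrite ?meet_pair //=.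
- by case: t; rewrite !eqxx ?orbT.
- by case: t'; rewrite !eqxx ?orbT.
Qed.

Lemma deg_inl k (a : bool) : deg (Gk k) (inl a) = k.+1.
Proof.
rewrite /deg.
have nI : forall b : bool, ((inl b : (bool + 'I_k)%type) \in inr @: [set: 'I_k]) = false.
  by move=> b; apply/negP => /imsetP[].
have -> : [set w | Gk k (inl a) w] = inl (~~ a) |: (inr @: [set: 'I_k]).
  apply/setP => w; rewrite !inE; case: w => [b|j] /=.
    by rewrite nI orbF /K2; case: a; case: b.
  by rewrite imset_f ?orbT.
rewrite cardsU1 card_imset; last by move=> x y [].
by rewrite cardsT card_ord nI.
Qed.

Lemma deg_inr k (i : 'I_k) : deg (Gk k) (inr i) = 2.
Proof.
rewrite /deg.
have -> : [set w | Gk k (inr i) w] = [set inl true; inl false].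
  by apply/setP => w; rewrite !inE; case: w => [[]|j].
by rewrite cards2.
Qed.

Lemma Adj_sym k (c d : Code k) : Adj c d = Adj d c.
Proof.
rewrite /Adj eq_sym; case: c => [[t i]|]; case: d => [[t' j]|] //=.
by rewrite (eq_sym t) (eq_sym i).
Qed.

Definition U k (t : bool) (i : 'I_k) : {set Code k} :=
  None |: (Some (~~ t, i) |: [set Some (t, j) | j in [set~ i]]).

Lemma Adj_U k t (i : 'I_k) d : Adj (Some (t, i)) d -> d \in U t i.
Proof.
rewrite /U /Adj !inE; case: d => [[t' j]|] //= /andP[ne h].
case Et: (t == t').
  move/eqP: Et => Et; subst t'.
  apply/orP; right; apply/imsetP; exists j => //.
  by rewrite !inE; apply: contraNneq ne => ->.
move: h; rewrite Et /= => /eqP Eij; subst j.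
by apply/orP; left; clear ne; move: Et; case: t; case: t'.
Qed.

Lemma card_U k t (i : 'I_k) : #|U t i| <= k.+1.
Proof.
rewrite /U !cardsU1.
apply: leq_trans (leq_add (leq_b1 _) (leq_add (leq_b1 _) (leq_imset_card _ _))) _.
rewrite cardsC1 card_ord; have := ltn_ord i; lia.
Qed.

Lemma nbr_card k t (i : 'I_k) (P : pred (Code k)) :
  (forall d, P d -> Adj (Some (t, i)) d) -> #|[set d | P d]| <= k.+1.
Proof.
move=> h; apply: leq_trans (card_U t i); apply: subset_leq_card.
by apply/subsetP => d; rewrite inE => /h /Adj_U.
Qed.

Lemma nbr_card_z k t (i : 'I_k) (P : pred (Code k)) z :
  (forall d, P d -> Adj (Some (t, i)) d) -> Adj (Some (t, i)) z -> ~~ P z ->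
  #|[set d | P d]| <= k.
Proof.
move=> h hz nz.
have := card_U t i; rewrite (cardsD1 z (U t i)) (Adj_U hz) add1n ltnS.
apply: leq_trans; apply: subset_leq_card.
apply/subsetP => d; rewrite inE => Pd; rewrite in_setD1 (Adj_U (h _ Pd)) andbT.
by apply: contraNneq nz => <-.
Qed.

Definition isX0 k (a : bool) (c : Code k) : bool :=
  if c is Some (t, i) then (t == a) && (nat_of_ord i == 0) else false.
Definition isY0 k (a : bool) (c : Code k) : bool :=
  if c is Some (t, i) then (t != a) && (nat_of_ord i == 0) else false.
Definition rk k (a : bool) (c : Code k) : nat :=
  match c with
  | None => k
  | Some (t, i) => if t == a then (k + k + 5 - i)%N
                   else if nat_of_ord i == 0 then k.+1 else if nat_of_ord i == 1 then k.+2 else (k - i)%N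
  end.
Definition Rm k (a : bool) (c d : Code k) : bool :=
  Adj c d && ((isY0 a c && isX0 a d) || (~~ (isX0 a c && isY0 a d) && (rk a d < rk a c))).

Lemma rk_inj k a : injective (@rk k a).
Proof.
move=> [[t i]|] [[t' j]|] /= H.
- have := ltn_ord i; have := ltn_ord j; move=> *.
  have ej: nat_of_ord i = nat_of_ord j -> t = t' -> Some (t, i) = Some (t', j).
    by move=> /val_inj -> ->.
  case Et: (t == a) H; case Et': (t' == a) => H.
  + by apply: ej; [lia | move/eqP: Et => ->; move/eqP: Et' => ->].
  + move: H; case: (nat_of_ord j == 0) => /=; [lia|]; case: (nat_of_ord j == 1) => /=; lia.
  + move: H; case: (nat_of_ord i == 0) => /=; [lia|]; case: (nat_of_ord i == 1) => /=; lia.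
  + apply: ej; last by move: Et Et'; case: t; case: t'; case: a.
    move: H.
    case: (eqVneq (nat_of_ord i) 0) => ei; case: (eqVneq (nat_of_ord i) 1) => ei1;
    case: (eqVneq (nat_of_ord j) 0) => ej0; case: (eqVneq (nat_of_ord j) 1) => ej1 /=; lia.
- have := ltn_ord i; move: H; case: (t == a); [lia|]; case: (eqVneq (nat_of_ord i) 0) => /= ?; [lia|]; case: (eqVneq (nat_of_ord i) 1) => /= ?; lia.
- have := ltn_ord j; move: H; case: (t' == a); [lia|]; case: (eqVneq (nat_of_ord j) 0) => /= ?; [lia|]; case: (eqVneq (nat_of_ord j) 1) => /= ?; lia.
- by [].
Qed.

Lemma Rm_Adj k a (c d : Code k) : Rm a c d -> Adj c d.
Proof. by case/andP. Qed.

Lemma Rm_orient k a (c d : Code k) : Adj c d -> Rm a c d || Rm a d c.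
Proof.
move=> h; rewrite /Rm h -Adj_sym h /=.
have ne : rk a c != rk a d.
  by apply: contraTneq h => /rk_inj ->; rewrite /Adj eqxx.
case: (ltngtP (rk a d) (rk a c)) => lt; last by move: ne; rewrite lt eqxx.
- case: (isX0 a c && isY0 a d) / andP => [[-> ->]|_]; by rewrite ?orbT.
- case: (isX0 a d && isY0 a c) / andP => [[-> ->]|_]; by rewrite ?orbT.
Qed.

Lemma ordE k (i j : 'I_k) : nat_of_ord i = nat_of_ord j -> i = j.
Proof. exact: val_inj. Qed.

Lemma notb_neq (t a : bool) : t != a -> t = ~~ a.
Proof. by case: t; case: a. Qed.

Lemma nAdj_nRm k a (c d : Code k) : ~~ Adj c d -> ~~ Rm a c d.
Proof. by apply: contra => /Rm_Adj. Qed.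

Lemma eq_negb_f (a : bool) : (a == ~~ a) = false.
Proof. by case: a. Qed.
Lemma eq_negb_f' (a : bool) : (~~ a == a) = false.
Proof. by case: a. Qed.

Lemma Rm_kp k a (k0 : 0 < k) : kernel_perfect (@Rm k a).
Proof.
apply: kp_sinks => A /set0Pn [c0 c0A].
pose o0 := Ordinal k0.
pose X0 : Code k := Some (a, o0).
case: (@arg_minnP _ c0 (fun x => x \in A) (rk a) c0A) => m mA mmin.
case: (boolP (isY0 a m && (X0 \in A))) => [/andP[Ym X0A]|nosp]; last first.
  left; exists m => // w wA; rewrite /Rm negb_and negb_or.
  apply/orP; right; apply/andP; split.
    apply: contra nosp => /andP[-> Xw]; rewrite andTb.
    suff <- : w = X0 by [].
    case: w Xw {wA} => [[t j]|] //= /andP[/eqP -> /eqP j0].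
    by rewrite /X0; congr (Some (_, _)); apply: ordE.
  by rewrite negb_and -leqNgt mmin ?orbT.
have {Ym} Em : m = Some (~~ a, o0).
  case: m Ym {mA mmin} => [[t j]|] //= /andP[ta /eqP j0].
  by rewrite (notb_neq ta); congr (Some (_, _)); apply: ordE.
subst m.
have rkA : forall w, w \in A -> k.+1 <= rk a w.
  move=> w /mmin; rewrite /=.
  have -> : (~~ a == a) = false by case: a {X0 X0A mA mmin}.
  by [].
pose rk2 (c : Code k) := match c with Some (t, i) => if t == a then (k - i)%N else (k + k + 1)%N | None => (k + k + 1)%N end.
case: (@arg_minnP _ X0 (fun x => x \in A) rk2 X0A) => m2 m2A m2min.
have := m2min _ X0A; rewrite /rk2 /= eqxx subn0.
case: m2 m2A m2min => [[t1 i1]|]; last by move=> *; lia.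
case: (eqVneq t1 a) => [->|ta]; last by move=> *; lia.
move=> m2A m2min _.
have i1k := ltn_ord i1.
case: (boolP ((nat_of_ord i1 == 1) && (Some (~~ a, i1) \in A))) => [/andP[/eqP i11 Y1A]|nosp2].
  have cls : forall w, w \in A ->
      [\/ w = X0, w = Some (a, i1), w = Some (~~ a, i1) | w = Some (~~ a, o0)].
    move=> w wA; have r1 := rkA _ wA; have r2 := m2min _ wA; move: r1 r2.
    case: w {wA} => [[t j]|] /=; last by lia.
    have jk := ltn_ord j.
    case: (eqVneq t a) => [->|ta].
      rewrite !eqxx => _ h.
      case: (eqVneq (nat_of_ord j) 0) => j0.
        by constructor 1; rewrite /X0; congr (Some (_, _)); apply: ordE.
      by constructor 2; congr (Some (_, _)); apply: ordE; lia.
    rewrite (notb_neq ta) => h _.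
    case: (eqVneq (nat_of_ord j) 0) h => j0 h.
      by constructor 4; congr (Some (_, _)); apply: ordE.
    case: (eqVneq (nat_of_ord j) 1) h => j1 h; last by lia.
    by constructor 3; congr (Some (_, _)); apply: ordE; lia.
  right; exists [set X0; Some (~~ a, i1)].
  have o0i1 : (o0 == i1) = false by apply/eqP => h; move: i11; rewrite -h.
  have i1o0 : (i1 == o0) = false by rewrite eq_sym.
  split; [|split].
  - by apply/subsetP => u; rewrite !inE => /orP[] /eqP ->.
  - move=> u v; rewrite !inE => /orP[] /eqP -> /orP[] /eqP ->; apply: nAdj_nRm;
      by rewrite /Adj /= ?eqxx ?eq_negb_f ?eq_negb_f' ?o0i1 ?i1o0 ?andbF.
  - move=> u uA; rewrite !inE negb_or => /andP[n1 n2].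
    case: (cls _ uA) => Eu; rewrite Eu ?eqxx in n1 n2 * => //.
      exists (Some (~~ a, i1)); first by rewrite !inE eqxx orbT.
      rewrite /Rm /Adj /= !eqxx eq_negb_f ?eq_negb_f' i11 /=.
      rewrite andbT; apply/andP; split; last by lia.
      by apply/eqP => -[] /eqP; rewrite eq_negb_f.
    exists X0; first by rewrite !inE eqxx.
    rewrite /Rm /Adj /= !eqxx eq_negb_f' ?eq_negb_f /=.
    by rewrite !andbT; apply/eqP => -[] /eqP; rewrite eq_negb_f'.
left; exists (Some (a, i1)) => // w wA.
apply/negP; rewrite /Rm => /andP[adj /orP[/andP[Y _]|/andP[nX lt]]].
  by rewrite /= eqxx in Y.
have r1 := rkA _ wA; have r2 := m2min _ wA.
move: adj nX lt r1 r2 wA; case: w => [[t j]|] /=; last by move=> *; lia.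
have jk := ltn_ord j.
case: (eqVneq t a) => [->|ta].
  by rewrite !eqxx => *; lia.
rewrite (notb_neq ta) /Adj /= ?eq_negb_f ?eq_negb_f' /= => /andP[_ /eqP ij]; subst j.
rewrite !eqxx /=.
case: (eqVneq (nat_of_ord i1) 0) => i0 //=.
case: (eqVneq (nat_of_ord i1) 1) => i1e /=; last by move=> *; lia.
by move=> _ _ _ _ h; move: nosp2; rewrite i1e h.
Qed.

Lemma Rm_out k a (k0 : 0 < k) p (p3 : 3 <= p) (pk : k.+1 <= p) (c : Code k) :
  1 + outdeg (@Rm k a) c <= (if inl a \in E c then k.+1 else p).
Proof.
rewrite /outdeg add1n.
case: c => [[t i]|] /=; last first.
  rewrite !inE; have -> : (inl a == inl true) || (inl a == inl false) = true by case: a.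
  rewrite ltnS.
  have hsub : [set d | Rm a None d] \subset (fun j => Some (~~ a, j)) @: [set: 'I_k].
    apply/subsetP => d; rewrite inE /Rm /= => /andP[_].
    case: d => [[t j]|] /=; last by lia.
    case: (eqVneq t a) => [->|ta].
      by have := ltn_ord j; lia.
    by move=> _; rewrite (notb_neq ta); apply: imset_f.
  apply: leq_trans (subset_leq_card hsub) _.
  by apply: leq_trans (leq_imset_card _ _) _; rewrite cardsT card_ord.
rewrite !inE /=.
have ik := ltn_ord i.
case: (eqVneq t a) => [->|ta].
  rewrite eqxx /= ltnS.
  case: (eqVneq (nat_of_ord i) 0) => i0.
    apply: (@nbr_card_z k a i _ (Some (~~ a, i))).
    - by move=> d /Rm_Adj.
    - by rewrite /Adj /= eq_negb_f eqxx orbT andbT; apply/eqP => -[] /eqP; rewrite eq_negb_f.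
    - by rewrite /Rm /= eqxx eq_negb_f' i0 /= andbF.
  apply: (@nbr_card_z k a i _ (Some (a, Ordinal k0))).
  - by move=> d /Rm_Adj.
  - rewrite /Adj /= eqxx andbT; apply/eqP => -[] h; move: i0; rewrite h /=; by [].
  - rewrite /Rm /= eqxx /= (negbTE i0) /= ltnNge leq_sub2l ?andbF //; lia.
have -> : (inl a == inl t :> (bool + 'I_k)%type) = false by apply/negbTE; apply: contra ta => /eqP [->].
rewrite (_ : (inl a == inr i :> (bool + 'I_k)%type) = false) //=.
case: (leqP k.+2 p) => kp.
  by apply: leq_trans kp; rewrite ltnS; apply: (@nbr_card k t i) => d /Rm_Adj.
have k1 : 1 < k by lia.
have pe : p = k.+1 by lia.
rewrite pe ltnS (notb_neq ta).
case: (eqVneq (nat_of_ord i) 0) => i0.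
  apply: (@nbr_card_z k (~~ a) i _ (Some (~~ a, Ordinal k1))).
  - by move=> d /Rm_Adj.
  - rewrite /Adj /= eqxx andbT; apply/eqP => -[] h; move: i0; rewrite h /=; by [].
  - rewrite /Rm /= eq_negb_f' /= i0 /=; lia.
apply: (@nbr_card_z k (~~ a) i _ (Some (a, i))).
- by move=> d /Rm_Adj.
- by rewrite /Adj /= eqxx orbT andbT; apply/eqP => -[] /eqP; rewrite eq_negb_f'.
- rewrite /Rm /= eq_negb_f' eqxx /= (negbTE i0) /=.
  case: (eqVneq (nat_of_ord i) 1) => /= *; lia.
Qed.

Definition rkt k (c : Code k) : nat := if c is Some (t, _) then nat_of_bool t else 2.
Definition Rt k (c d : Code k) : bool := Adj c d && (rkt d < rkt c).

Lemma Rt_kp k : kernel_perfect (@Rt k).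
Proof.
apply: kp_sinks => A /set0Pn [c0 c0A]; left.
case: (@arg_minnP _ c0 (fun x => x \in A) (@rkt k) c0A) => m mA mmin.
exists m => // w /mmin; rewrite /Rt leqNgt; by case: (rkt w < rkt m); rewrite ?andbF.
Qed.

Lemma Rt_out k (k1 : k = 1) (i : 'I_k) p (p3 : 3 <= p) (c : Code k) :
  1 + outdeg (@Rt k) c <= (if inr i \in E c then 2 else p).
Proof.
rewrite /outdeg add1n.
case: c => [[t j]|] /=.
  have -> : inr i \in [set inl t; inr j] = true.
    rewrite !inE /=; apply/eqP; congr inr; apply: ordE.
    have := ltn_ord i; have := ltn_ord j; lia.
  rewrite ltnS; apply: leq_trans (@nbr_card_z k t j (Rt (Some (t, j))) None _ _ _) _.
  - by move=> d /andP[].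
  - by [].
  - by rewrite /Rt /=; case: t.
  - by rewrite k1.
have -> : inr i \in [set inl true; inl false] = false by rewrite !inE.
have hsub : [set d | Rt None d] \subset [set~ (None : Code k)] by apply/subsetP => d; rewrite !inE; case: d.
apply: leq_ltn_trans (subset_leq_card hsub) _.
rewrite cardsC1 card_option card_prod card_bool card_ord k1; lia.
Qed.
Unset Implicit Arguments.

Theorem mainTheorem16 (k : nat) (v : (bool + 'I_k)%type) (p : nat) :
  1 <= k ->
  (forall w : (bool + 'I_k)%type, deg (Gk k) w <= deg (Gk k) v) ->
  maxn 3 (maxdeg (Gk k)) <= p ->
  f_edge_orientable (Gk k) (f_pv (Gk k) p v).
Proof.
move=> k0 vmax; rewrite geq_max => /andP[p3 pm].
have pk : k.+1 <= p.
  apply: leq_trans pm; rewrite -(deg_inl k true) /maxdeg. apply: (@leq_bigmax _ (fun w => deg (Gk k) w)).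
case: v vmax => [a|i] vmax.
  apply: (transfer (@phiK k) (@psiK k) (R := @Rm k a)).
  - by move=> c d h; rewrite lineE; apply: Rm_Adj h.
  - by move=> c d; rewrite lineE; apply: Rm_orient.
  - exact: Rm_kp.
  - by move=> c; rewrite /f_pv /= deg_inl; apply: Rm_out.
have k1 : k = 1 by have := vmax (inl true); rewrite deg_inl deg_inr; lia.
apply: (transfer (@phiK k) (@psiK k) (R := @Rt k)).
- by move=> c d /andP[h _]; rewrite lineE.
- move=> c d; rewrite lineE /Rt => h; rewrite h -Adj_sym h /=.
  case: (ltngtP (rkt d) (rkt c)) => //= e.
  move: h; case: c d e => [[t j]|] [[t' j']|] //=; [move=> e| by case: t| by case: t'].
  have jj : j = j' by apply: ordE; have := ltn_ord j; have := ltn_ord j'; lia.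
  subst j'; have -> : t = t' by move: e; case: t; case: t'.
  by rewrite /Adj eqxx.
- exact: Rt_kp.
- by move=> c; rewrite /f_pv /= deg_inr; apply: Rt_out.
Qed.
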